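(* Let $\{B_n(\mathbf{t})\}_{n\in\mathbb{N}}$ be a solution of the Volterra lattice hierarchy, i.e. of the compatible equations $$\partial_{t_{2k}}B_n=B_n\big(V^{(2k)}_{n+1}-V^{(2k)}_{n-1}\big),$$ where $V^{(2)}_n=B_n$, $V^{(4)}_n=V^{(2)}_n\big(V^{(2)}_{n-1}+V^{(2)}_n+V^{(2)}_{n+1}\big)$, $V^{(6)}_n=V^{(2)}_n\big(V^{(2)}_{n-1}V^{(2)}_{n+1}+V^{(4)}_{n-1}+V^{(4)}_n+V^{(4)}_{n+1}\big)$ (so that in particular $\partial_{t_2}B_n=B_n(B_{n+1}-B_{n-1})$). For a given $n\in\mathbb{N}$ set $\phi(\mathbf{t})=B_n(\mathbf{t})$, $\psi(\mathbf{t})=B_{n-1}(\mathbf{t})$, and write $x=t_2$, $y=t_4$, $t=t_6$. Then $\phi,\psi$ satisfy the two compatible systems of $(1+1)$-dimensional conservation laws $$\phi_y=\big(\phi^2+2\phi\psi+\phi_x\big)_x,\qquad \psi_y=\big(\psi^2+2\phi\psi-\psi_x\big)_x,$$ and $$\phi_t=\big(\phi^3+3(\psi+2\phi)\phi\psi+3(\phi+\psi)\phi_x+\phi_{xx}\big)_x,\qquad \psi_t=\big(\psi^3+3(\phi+2\psi)\phi\psi-3(\phi+\psi)\psi_x+\psi_{xx}\big)_x.$$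
   Context: $\mathbf{t}=(t_2,t_4,t_6,\dots)$ denotes the even coupling constants (times of the hierarchy); subscripts $x,y,t$ denote partial derivatives with respect to $t_2,t_4,t_6$ respectively. *)

(* Defs.v *)
From Stdlib Require Import Reals ZArith.
From Coquelicot Require Import Coquelicot.
Open Scope R_scope.

(* A function of the three times x = t_2, y = t_4, t = t_6
   (the higher times t_8, t_10, ... are held fixed). *)
Definition state := R -> R -> R -> R.

Definition dx (f : state) : state := fun x y t => Derive (fun s => f s y t) x.
Definition dy (f : state) : state := fun x y t => Derive (fun s => f x s t) y.
Definition dt (f : state) : state := fun x y t => Derive (fun s => f x y s) t.

Definition V2 (B : Z -> state) (n : Z) : state := B n.
Definition V4 (B : Z -> state) (n : Z) : state := fun x y t =>
  V2 B n x y t * (V2 B (n - 1)%Z x y t + V2 B n x y t + V2 B (n + 1)%Z x y t).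
Definition V6 (B : Z -> state) (n : Z) : state := fun x y t =>
  V2 B n x y t * (V2 B (n - 1)%Z x y t * V2 B (n + 1)%Z x y t
                  + V4 B (n - 1)%Z x y t + V4 B n x y t + V4 B (n + 1)%Z x y t).

Definition volterra_hierarchy (B : Z -> state) : Prop :=
  forall (n : Z) (x y t : R),
    is_derive (fun s => B n s y t) x
      (B n x y t * (V2 B (n + 1)%Z x y t - V2 B (n - 1)%Z x y t)) /\
    is_derive (fun s => B n x s t) y
      (B n x y t * (V4 B (n + 1)%Z x y t - V4 B (n - 1)%Z x y t)) /\
    is_derive (fun s => B n x y s) t
      (B n x y t * (V6 B (n + 1)%Z x y t - V6 B (n - 1)%Z x y t)).

(* Main.v *)
Require Import Defs.
From Stdlib Require Import Reals ZArith.
From Coquelicot Require Import Coquelicot.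
Open Scope R_scope.
Lemma dmul (f g : R -> R) (x df dg : R) : is_derive f x df -> is_derive g x dg ->
  is_derive (fun s => f s * g s) x (df * g x + f x * dg).
Proof. intros. apply (is_derive_mult f g x df dg); auto. intros; apply Rmult_comm. Qed.
Lemma dplus (f g : R -> R) (x df dg : R) : is_derive f x df -> is_derive g x dg ->
  is_derive (fun s => f s + g s) x (df + dg).
Proof. intros. apply (is_derive_plus f g x df dg); auto. Qed.
Lemma dminus (f g : R -> R) (x df dg : R) : is_derive f x df -> is_derive g x dg ->
  is_derive (fun s => f s - g s) x (df - dg).
Proof. intros. apply (is_derive_minus f g x df dg); auto. Qed.
Lemma deq (f : R -> R) (x l l' : R) : is_derive f x l' -> l' = l -> is_derive f x l.
Proof. intros H ->; auto. Qed.
Lemma dpow2 (f : R -> R) (x df : R) : is_derive f x df -> is_derive (fun s => f s ^ 2) x (2 * df * f x).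
Proof. intros. apply (is_derive_ext (fun s => f s * f s)). intro s. simpl; ring.
 eapply deq. apply dmul; eauto. ring. Qed.
Lemma dpow3 (f : R -> R) (x df : R) : is_derive f x df -> is_derive (fun s => f s ^ 3) x (3 * df * f x ^ 2).
Proof. intros. apply (is_derive_ext (fun s => f s * (f s * f s))). intro s. simpl; ring.
 eapply deq. apply dmul; eauto. apply dmul; eauto. simpl; ring. Qed.
Lemma dconst (c x : R) : is_derive (fun _ => c) x 0.
Proof. apply (is_derive_const c x). Qed.


Lemma extR (f g : R -> R) (x l : R) : (forall s, f s = g s) -> is_derive f x l -> is_derive g x l.
Proof. intros H1 H2. eapply is_derive_ext; eauto. Qed.
Ltac ext := match goal with |- is_derive ?g _ _ => eapply (extR _ g) end.

Ltac normZ := repeat match goal with |- context[?B ?m] =>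
   match type of m with Z => progress ring_simplify m end end.

Lemma Dx (B : Z -> state) (HB : volterra_hierarchy B) (y t : R) m s :
  is_derive (fun u => B m u y t) s (B m s y t * (B (m+1)%Z s y t - B (m-1)%Z s y t)).
Proof. apply HB. Qed.

Ltac der B HB := match goal with
 | |- is_derive (fun s => @?f s + @?g s) _ _ => eapply dplus; [der B HB | der B HB]
 | |- is_derive (fun s => @?f s - @?g s) _ _ => eapply dminus; [der B HB | der B HB]
 | |- is_derive (fun s => @?f s * @?g s) _ _ => eapply dmul; [der B HB | der B HB]
 | |- is_derive (fun s => @?f s ^ 2) _ _ => eapply dpow2; der B HB
 | |- is_derive (fun s => @?f s ^ 3) _ _ => eapply dpow3; der B HB
 | |- is_derive (fun s => B ?m s ?y ?t) _ _ => apply (Dx B HB y t m)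
 | |- is_derive (fun s => ?c) _ _ => apply dconst
 end.

Theorem lemma2p3 (B : Z -> state) (n : Z) (HB : volterra_hierarchy B) :
  let phi := B n in
  let psi := B (n - 1)%Z in
  forall x y t : R,
    is_derive (fun s => phi s y t ^ 2 + 2 * phi s y t * psi s y t + dx phi s y t)
      x (dy phi x y t) /\
    is_derive (fun s => psi s y t ^ 2 + 2 * phi s y t * psi s y t - dx psi s y t)
      x (dy psi x y t) /\
    is_derive (fun s => phi s y t ^ 3
                        + 3 * (psi s y t + 2 * phi s y t) * phi s y t * psi s y t
                        + 3 * (phi s y t + psi s y t) * dx phi s y t
                        + dx (dx phi) s y t)
      x (dt phi x y t) /\
    is_derive (fun s => psi s y t ^ 3
                        + 3 * (phi s y t + 2 * psi s y t) * phi s y t * psi s y t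
                        - 3 * (phi s y t + psi s y t) * dx psi s y t
                        + dx (dx psi) s y t)
      x (dt psi x y t).
Proof.
  intros phi psi x y t.
  assert (E1 : forall m s, dx (B m) s y t = B m s y t * (B (m+1)%Z s y t - B (m-1)%Z s y t)).
  { intros m s. unfold dx. apply is_derive_unique. apply HB. }
  assert (E2 : forall m s, dx (dx (B m)) s y t =
     Derive (fun u => B m u y t * (B (m+1)%Z u y t - B (m-1)%Z u y t)) s).
  { intros m s. unfold dx at 1. apply Derive_ext. intro u. apply E1. }
  assert (Ey : forall m, dy (B m) x y t = B m x y t * (V4 B (m + 1)%Z x y t - V4 B (m - 1)%Z x y t)).
  { intros m. unfold dy. apply is_derive_unique. apply HB. }
  assert (Et : forall m, dt (B m) x y t = B m x y t * (V6 B (m + 1)%Z x y t - V6 B (m - 1)%Z x y t)).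
  { intros m. unfold dt. apply is_derive_unique. apply HB. }
  assert (E3 : forall m s, dx (dx (B m)) s y t =
     (B m s y t * (B (m+1)%Z s y t - B (m-1)%Z s y t)) * (B (m+1)%Z s y t - B (m-1)%Z s y t)
     + B m s y t * (B (m+1)%Z s y t * (B (m+1+1)%Z s y t - B m s y t)
                   - B (m-1)%Z s y t * (B m s y t - B (m-1-1)%Z s y t))).
  { intros m s. rewrite E2. apply is_derive_unique. eapply deq. der B HB. normZ. ring. }
  subst phi psi.
  split; [|split; [|split]].
  - ext. { intro s. cbv beta. rewrite (E1 n s). reflexivity. }
    rewrite Ey. unfold V4, V2. eapply deq. der B HB. normZ. ring.
  - ext. { intro s. cbv beta. rewrite (E1 (n-1)%Z s). reflexivity. }
    rewrite Ey. unfold V4, V2. eapply deq. der B HB. normZ. ring.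
  - ext. { intro s. cbv beta. rewrite (E1 n s), (E3 n s). reflexivity. }
    rewrite Et. unfold V6, V4, V2. eapply deq. der B HB. normZ. ring.
  - ext. { intro s. cbv beta. rewrite (E1 (n-1)%Z s), (E3 (n-1)%Z s). reflexivity. }
    rewrite Et. unfold V6, V4, V2. eapply deq. der B HB. normZ. ring.
Qed.
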